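(* (i) Let $(H,\mathcal{R})$ be a quasitriangular Hopf algebra over a field $k$ with $H\neq k$. Then the functor ${}_H\mathcal{M}\to{}^H_H\mathcal{M}$ sending a left $H$-module $(V,\triangleright)$ to the crossed module $(V,\triangleright,\beta)$ with $\beta(v)=\mathcal{R}^{(2)}\otimes\mathcal{R}^{(1)}\triangleright v$, and acting as the identity on morphisms, is not an isomorphism of categories. (ii) Let $(H,\mathcal{R})$ be a dual quasitriangular Hopf algebra over $k$ with $H\neq k$. Then the functor ${}^H\mathcal{M}\to{}^H_H\mathcal{M}$ sending a left $H$-comodule $(V,\beta)$, $\beta(v)=v^{\bar{(1)}}\otimes v^{\bar{(2)}}$, to $(V,\beta,\triangleright)$ with $h\triangleright v=\mathcal{R}(v^{\bar{(1)}}\otimes h)v^{\bar{(2)}}$, and acting as the identity on morphisms, is not an isomorphism of categories.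
   Context: A quasitriangular Hopf algebra is a Hopf algebra $H$ with invertible $\mathcal{R}=\mathcal{R}^{(1)}\otimes\mathcal{R}^{(2)}\in H\otimes H$ (summation understood) with $(\Delta\otimes\mathrm{id})\mathcal{R}=\mathcal{R}_{13}\mathcal{R}_{23}$, $(\mathrm{id}\otimes\Delta)\mathcal{R}=\mathcal{R}_{13}\mathcal{R}_{12}$, $\Delta^{op}=\mathcal{R}(\Delta\,\cdot)\mathcal{R}^{-1}$. A dual quasitriangular Hopf algebra is a Hopf algebra with a convolution-invertible $\mathcal{R}:H\otimes H\to k$ satisfying $\mathcal{R}(hg\otimes f)=\mathcal{R}(h\otimes f_{(1)})\mathcal{R}(g\otimes f_{(2)})$, $\mathcal{R}(h\otimes gf)=\mathcal{R}(h_{(1)}\otimes f)\mathcal{R}(h_{(2)}\otimes g)$, $g_{(1)}h_{(1)}\mathcal{R}(h_{(2)}\otimes g_{(2)})=\mathcal{R}(h_{(1)}\otimes g_{(1)})h_{(2)}g_{(2)}$. ${}_H\mathcal{M}$ and ${}^H\mathcal{M}$ denote the categories of left $H$-modules and left $H$-comodules. ${}^H_H\mathcal{M}$ is the category of left crossed modules: vector spaces $V$ with a left $H$-action $\triangleright$ and a left $H$-coaction $v\mapsto v^{\bar{(1)}}\otimes v^{\bar{(2)}}\in H\otimes V$ satisfying $h_{(1)}v^{\bar{(1)}}\otimes h_{(2)}\triangleright v^{\bar{(2)}}=(h_{(1)}\triangleright v)^{\bar{(1)}}h_{(2)}\otimes(h_{(1)}\triangleright v)^{\bar{(2)}}$,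 with morphisms the linear maps intertwining both the action and the coaction. *)

(* Defs.v *)
(* Hopf algebras, (co)modules and crossed modules over a
   field k, with tensors represented as finite formal sums (lists of pairs /
   triples) whose equality is the equality in the algebraic tensor product,
   characterised by its universal property (equal images under every
   multilinear map into every k-vector space). *)
From HB Require Import structures.
From mathcomp Require Import all_boot all_order all_algebra.
Set Implicit Arguments. Unset Strict Implicit. Unset Printing Implicit Defensive.
Import GRing.Theory.
Local Open Scope ring_scope.

Section Defs.
Variable k : fieldType.

Definition lin (U W : lmodType k) (f : U -> W) : Prop :=
  forall (c : k) (x y : U), f (c *: x + y) = c *: f x + f y.

Definition bilin (A B W : lmodType k) (phi : A -> B -> W) : Prop :=
  (forall b, lin (fun a => phi a b)) /\ (forall a, lin (phi a)).

Definition trilin (A B C W : lmodType k) (phi : A -> B -> C -> W) : Prop :=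
  [/\ (forall b c, lin (fun a => phi a b c)),
      (forall a c, lin (fun b => phi a b c)) &
      (forall a b, lin (phi a b))].

(* s : seq (A * B) stands for  \sum_(p <- s) p.1 (x) p.2  in A (x) B *)
Definition teq2 (A B : lmodType k) (s t : seq (A * B)) : Prop :=
  forall (W : lmodType k) (phi : A -> B -> W), bilin phi ->
    \sum_(p <- s) phi p.1 p.2 = \sum_(p <- t) phi p.1 p.2.

Definition teq3 (A B C : lmodType k) (s t : seq (A * B * C)) : Prop :=
  forall (W : lmodType k) (phi : A -> B -> C -> W), trilin phi ->
    \sum_(p <- s) phi p.1.1 p.1.2 p.2 = \sum_(p <- t) phi p.1.1 p.1.2 p.2.

(* c * s  (scalar acting on the tensor s);  s + t is concatenation *)
Definition tscale (A B : lmodType k) (c : k) (s : seq (A * B)) : seq (A * B) :=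
  [seq (c *: p.1, p.2) | p <- s].

Section Hopf.
Variable H : algType k.

Definition tmul2 (s t : seq (H * H)) : seq (H * H) :=
  [seq (p.1 * q.1, p.2 * q.2) | p <- s, q <- t].

(* H <> k : H is not spanned by its unit *)
Definition nontrivial_hopf : Prop := exists h : H, forall c : k, h <> c%:A.

Record is_hopf (D : H -> seq (H * H)) (e : H -> k) (S : H -> H) : Prop := {
  hopf_D_lin : forall c x y, teq2 (D (c *: x + y)) (tscale c (D x) ++ D y);
  hopf_coassoc : forall h,
    teq3 [seq (q.1, q.2, p.2) | p <- D h, q <- D p.1]
         [seq (p.1, q.1, q.2) | p <- D h, q <- D p.2];
  hopf_e_lin : forall c x y, e (c *: x + y) = c * e x + e y;
  hopf_counitl : forall h, \sum_(p <- D h) e p.1 *: p.2 = h;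
  hopf_counitr : forall h, \sum_(p <- D h) e p.2 *: p.1 = h;
  hopf_D_mul : forall g h, teq2 (D (g * h)) (tmul2 (D g) (D h));
  hopf_D_1 : teq2 (D 1) [:: (1, 1)];
  hopf_e_mul : forall g h, e (g * h) = e g * e h;
  hopf_e_1 : e 1 = 1;
  hopf_S_lin : lin S;
  hopf_antipodel : forall h, \sum_(p <- D h) S p.1 * p.2 = (e h)%:A;
  hopf_antipoder : forall h, \sum_(p <- D h) p.1 * S p.2 = (e h)%:A }.

Record is_quasitriangular (D : H -> seq (H * H)) (R : seq (H * H)) : Prop := {
  qt_inv : exists Rinv : seq (H * H),
    [/\ teq2 (tmul2 R Rinv) [:: (1, 1)],
        teq2 (tmul2 Rinv R) [:: (1, 1)] &
        forall h, teq2 [seq (p.2, p.1) | p <- D h] (tmul2 (tmul2 R (D h)) Rinv)];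
  (* (D (x) id) R = R13 R23 *)
  qt_D1 : teq3 [seq (q.1, q.2, r.2) | r <- R, q <- D r.1]
               [seq (r.1, s.1, r.2 * s.2) | r <- R, s <- R];
  (* (id (x) D) R = R13 R12 *)
  qt_D2 : teq3 [seq (r.1, q.1, q.2) | r <- R, q <- D r.2]
               [seq (r.1 * s.1, s.2, r.2) | r <- R, s <- R] }.

(* R : H (x) H -> k, given as a bilinear form *)
Record is_dual_quasitriangular (D : H -> seq (H * H)) (e : H -> k)
    (R : H -> H -> k) : Prop := {
  dqt_bilin : (forall b c x y, R (c *: x + y) b = c * R x b + R y b) /\
              (forall a c x y, R a (c *: x + y) = c * R a x + R a y);
  dqt_inv : exists R' : H -> H -> k,
    [/\ (forall b c x y, R' (c *: x + y) b = c * R' x b + R' y b),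
        (forall a c x y, R' a (c *: x + y) = c * R' a x + R' a y),
        (forall h g, \sum_(p <- D h) \sum_(q <- D g) R p.1 q.1 * R' p.2 q.2
                       = e h * e g) &
        (forall h g, \sum_(p <- D h) \sum_(q <- D g) R' p.1 q.1 * R p.2 q.2
                       = e h * e g)];
  dqt_mull : forall h g f, R (h * g) f = \sum_(p <- D f) R h p.1 * R g p.2;
  dqt_mulr : forall h g f, R h (g * f) = \sum_(p <- D h) R p.1 f * R p.2 g;
  dqt_comm : forall g h,
    \sum_(p <- D g) \sum_(q <- D h) R q.2 p.2 *: (p.1 * q.1)
    = \sum_(q <- D h) \sum_(p <- D g) R q.1 p.1 *: (q.2 * p.2) }.

Definition is_module (V : lmodType k) (act : H -> V -> V) : Prop :=
  [/\ bilin act, (forall v, act 1 v = v) &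
      (forall g h v, act (g * h) v = act g (act h v))].

Definition is_comodule (D : H -> seq (H * H)) (e : H -> k)
    (V : lmodType k) (co : V -> seq (H * V)) : Prop :=
  [/\ (forall c x y, teq2 (co (c *: x + y)) (tscale c (co x) ++ co y)),
      (forall v, teq3 [seq (q.1, q.2, p.2) | p <- co v, q <- D p.1]
                      [seq (p.1, q.1, q.2) | p <- co v, q <- co p.2]) &
      (forall v, \sum_(p <- co v) e p.1 *: p.2 = v)].

Definition is_crossed_module (D : H -> seq (H * H)) (e : H -> k)
    (V : lmodType k) (act : H -> V -> V) (co : V -> seq (H * V)) : Prop :=
  [/\ is_module act, is_comodule D e co &
      forall h v,
        teq2 [seq (p.1 * q.1, act p.2 q.2) | p <- D h, q <- co v]
             [seq (q.1 * p.2, q.2) | p <- D h, q <- co (act p.1 v)]].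

Definition mod_hom (V W : lmodType k) (actV : H -> V -> V) (actW : H -> W -> W)
    (f : V -> W) : Prop :=
  lin f /\ forall h v, f (actV h v) = actW h (f v).

Definition comod_hom (V W : lmodType k) (coV : V -> seq (H * V))
    (coW : W -> seq (H * W)) (f : V -> W) : Prop :=
  lin f /\ forall v, teq2 [seq (p.1, f p.2) | p <- coV v] (coW (f v)).

Definition crossed_hom (V W : lmodType k) (actV : H -> V -> V)
    (coV : V -> seq (H * V)) (actW : H -> W -> W) (coW : W -> seq (H * W))
    (f : V -> W) : Prop :=
  mod_hom actV actW f /\ comod_hom coV coW f.

Definition QT_coact (R : seq (H * H)) (V : lmodType k) (act : H -> V -> V)
    (v : V) : seq (H * V) :=
  [seq (r.2, act r.1 v) | r <- R].

Definition DQT_act (R : H -> H -> k) (V : lmodType k) (co : V -> seq (H * V))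
    (h : H) (v : V) : V :=
  \sum_(p <- co v) R p.1 h *: p.2.

(* Since the functor does not
   change the underlying vector space, objects are compared over the same V;
   two crossed-module structures on V are equal when the actions agree and
   the coactions agree as elements of H (x) V. *)
Definition QT_functor_iso (D : H -> seq (H * H)) (e : H -> k)
    (R : seq (H * H)) : Prop :=
  [/\
      (forall (V : lmodType k) (act : H -> V -> V) (co : V -> seq (H * V)),
         is_crossed_module D e act co ->
         exists act' : H -> V -> V,
           [/\ is_module act', (forall h v, act' h v = act h v) &
               forall v, teq2 (QT_coact R act' v) (co v)]),
      (forall (V : lmodType k) (act1 act2 : H -> V -> V),
         is_module act1 -> is_module act2 ->
         (forall h v, act1 h v = act2 h v) ->
         (forall v, teq2 (QT_coact R act1 v) (QT_coact R act2 v)) ->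
         forall h v, act1 h v = act2 h v) &
      (* bijective on morphisms (the functor is the identity on maps) *)
      (forall (V W : lmodType k) (actV : H -> V -> V) (actW : H -> W -> W)
              (f : V -> W),
         is_module actV -> is_module actW ->
         (mod_hom actV actW f <->
          crossed_hom actV (QT_coact R actV) actW (QT_coact R actW) f))].

Definition DQT_functor_iso (D : H -> seq (H * H)) (e : H -> k)
    (R : H -> H -> k) : Prop :=
  [/\
      (forall (V : lmodType k) (act : H -> V -> V) (co : V -> seq (H * V)),
         is_crossed_module D e act co ->
         exists co' : V -> seq (H * V),
           [/\ is_comodule D e co', (forall v, teq2 (co' v) (co v)) &
               forall h v, DQT_act R co' h v = act h v]),
      (forall (V : lmodType k) (co1 co2 : V -> seq (H * V)),
         is_comodule D e co1 -> is_comodule D e co2 ->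
         (forall v, teq2 (co1 v) (co2 v)) ->
         (forall h v, DQT_act R co1 h v = DQT_act R co2 h v) ->
         forall v, teq2 (co1 v) (co2 v)) &
      (forall (V W : lmodType k) (coV : V -> seq (H * V)) (coW : W -> seq (H * W))
              (f : V -> W),
         is_comodule D e coV -> is_comodule D e coW ->
         (comod_hom coV coW f <->
          crossed_hom (DQT_act R coV) coV (DQT_act R coW) coW f))].

End Hopf.
End Defs.

(* Main.v *)
Require Import Defs.
From HB Require Import structures.
From mathcomp Require Import all_boot all_order all_algebra.
Import GRing.Theory.
Local Open Scope ring_scope.
Module Aux.
Set Implicit Arguments. Unset Strict Implicit. Unset Printing Implicit Defensive.
Section Gen.
Variable k : fieldType.

Lemma lin0 (U W : lmodType k) (f : U -> W) : lin f -> f 0 = 0.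
Proof.
move=> hf; have E := hf 1 0 0; rewrite scaler0 addr0 scale1r in E.
by apply: (addIr (f 0)); rewrite add0r -E.
Qed.

Lemma linD (U W : lmodType k) (f : U -> W) x y : lin f -> f (x + y) = f x + f y.
Proof. by move=> hf; have := hf 1 x y; rewrite !scale1r. Qed.

Lemma linZ (U W : lmodType k) (f : U -> W) c x : lin f -> f (c *: x) = c *: f x.
Proof. by move=> hf; have := hf c x 0; rewrite addr0 (lin0 hf) addr0. Qed.

Lemma lin_sum (U W : lmodType k) (f : U -> W) (I : Type) (s : seq I) g :
  lin f -> f (\sum_(i <- s) g i) = \sum_(i <- s) f (g i).
Proof.
move=> hf; elim: s => [|a s IH]; first by rewrite !big_nil (lin0 hf).
by rewrite !big_cons (linD _ _ hf) IH.
Qed.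

Lemma lin_id (U : lmodType k) : lin (fun a : U => a).
Proof. by []. Qed.

Lemma lin_add (U W : lmodType k) (f g : U -> W) :
  lin f -> lin g -> lin (fun a => f a + g a).
Proof.
move=> hf hg c x y; rewrite hf hg scalerDr.
by rewrite -!addrA; congr (_ + _); rewrite addrCA.
Qed.

Lemma lin_scale (U W : lmodType k) (f : U -> W) s :
  lin f -> lin (fun a => s *: f a).
Proof. by move=> hf c x y; rewrite hf scalerDr !scalerA mulrC. Qed.

Lemma lin_bilL (U A B W : lmodType k) (phi : A -> B -> W) (f : U -> A) b :
  bilin phi -> lin f -> lin (fun a => phi (f a) b).
Proof. by case=> h1 _ hf c x y; rewrite hf h1. Qed.

Lemma lin_bilR (U A B W : lmodType k) (phi : A -> B -> W) (f : U -> B) b :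
  bilin phi -> lin f -> lin (fun a => phi b (f a)).
Proof. by case=> _ h2 hf c x y; rewrite hf h2. Qed.

Lemma lin_tri1 (U A B C W : lmodType k) (phi : A -> B -> C -> W) (f : U -> A) b d :
  trilin phi -> lin f -> lin (fun a => phi (f a) b d).
Proof. by case=> h1 _ _ hf c x y; rewrite hf h1. Qed.
Lemma lin_tri2 (U A B C W : lmodType k) (phi : A -> B -> C -> W) (f : U -> B) b d :
  trilin phi -> lin f -> lin (fun a => phi b (f a) d).
Proof. by case=> _ h1 _ hf c x y; rewrite hf h1. Qed.
Lemma lin_tri3 (U A B C W : lmodType k) (phi : A -> B -> C -> W) (f : U -> C) b d :
  trilin phi -> lin f -> lin (fun a => phi b d (f a)).
Proof. by case=> _ _ h1 hf c x y; rewrite hf h1. Qed.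

Lemma lin_sumP (U W : lmodType k) (I : Type) (s : seq I) (G : U -> I -> W) :
  (forall i, lin (fun a => G a i)) -> lin (fun a => \sum_(i <- s) G a i).
Proof.
move=> hG c x y; rewrite scaler_sumr -big_split /=.
by apply: eq_bigr => i _; rewrite hG.
Qed.

Variable H : algType k.

Lemma lin_mulr (U : lmodType k) (f : U -> H) u : lin f -> lin (fun a => f a * u).
Proof. by move=> hf c x y; rewrite hf mulrDl scalerAl. Qed.
Lemma lin_mull (U : lmodType k) (f : U -> H) u : lin f -> lin (fun a => u * f a).
Proof. by move=> hf c x y; rewrite hf mulrDr scalerAr. Qed.

End Gen.
Section Hopf.
Variables (k : fieldType) (H : algType k) (D : H -> seq (H * H)) (e : H -> k) (S : H -> H).
Hypothesis hH : is_hopf D e S.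

Definition D2 (W : lmodType k) (h : H) (F : H -> H -> W) : W := \sum_(p <- D h) F p.1 p.2.
Definition R3 (W : lmodType k) (h : H) (F : H -> H -> H -> W) : W :=
  D2 h (fun a m => D2 m (F a)).
Definition R4 (W : lmodType k) (h : H) (F : H -> H -> H -> H -> W) : W :=
  D2 h (fun a m => R3 m (F a)).
Definition R5 (W : lmodType k) (h : H) (F : H -> H -> H -> H -> H -> W) : W :=
  D2 h (fun a m => R4 m (F a)).

Definition ml4 (W : lmodType k) (F : H -> H -> H -> H -> W) :=
  [/\ forall b c d, lin (fun a => F a b c d), forall a c d, lin (fun b => F a b c d),
      forall a b d, lin (fun c => F a b c d) & forall a b c, lin (fun d => F a b c d)].
Definition ml5 (W : lmodType k) (F : H -> H -> H -> H -> H -> W) :=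
  [/\ forall b c d f, lin (fun a => F a b c d f), forall a c d f, lin (fun b => F a b c d f),
      forall a b d f, lin (fun c => F a b c d f), forall a b c f, lin (fun d => F a b c d f) &
      forall a b c d, lin (fun f => F a b c d f)].

Lemma S_lin : lin S. Proof. exact: hopf_S_lin hH. Qed.

Lemma lin_Sc (U : lmodType k) (f : U -> H) : lin f -> lin (fun a => S (f a)).
Proof. by move=> hf c x y; rewrite hf S_lin. Qed.

Lemma lin_eZ (U W : lmodType k) (f : U -> H) (w : W) : lin f -> lin (fun a => e (f a) *: w).
Proof. by move=> hf c x y; rewrite hf (hopf_e_lin hH) scalerDl scalerA. Qed.

Lemma D2_lin (W : lmodType k) (F : H -> H -> W) : bilin F -> lin (fun h => D2 h F).
Proof.
move=> hF c x y; rewrite /D2 (hopf_D_lin hH c x y hF) big_cat big_map /= scaler_sumr.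
by congr (_ + _); apply: eq_bigr => p _; have [h1 _] := hF; have := h1 p.2 c p.1 0;
  rewrite addr0 (lin0 (h1 p.2)) addr0.
Qed.

Lemma lin_D2A (U W : lmodType k) (f : U -> H) (F : H -> H -> W) :
  lin f -> bilin F -> lin (fun a => D2 (f a) F).
Proof. by move=> hf hF c x y; rewrite hf (D2_lin hF). Qed.

Lemma lin_D2P (U W : lmodType k) h (G : U -> H -> H -> W) :
  (forall x y, lin (fun a => G a x y)) -> lin (fun a => D2 h (G a)).
Proof. by move=> hG; apply: lin_sumP => p; apply: hG. Qed.

Lemma eq_D2 (W : lmodType k) h (F G : H -> H -> W) :
  (forall a b, F a b = G a b) -> D2 h F = D2 h G.
Proof. by move=> E; apply: eq_bigr => p _; apply: E. Qed.

Lemma D2_swap (W : lmodType k) h g (F : H -> H -> H -> H -> W) :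
  D2 h (fun a b => D2 g (F a b)) = D2 g (fun c d => D2 h (fun a b => F a b c d)).
Proof. by rewrite /D2 exchange_big. Qed.

Lemma D2_pull (W W' : lmodType k) (f : W -> W') h (F : H -> H -> W) :
  lin f -> f (D2 h F) = D2 h (fun a b => f (F a b)).
Proof. by move=> hf; rewrite /D2 lin_sum. Qed.

Lemma D2_scale (W : lmodType k) h c (F : H -> H -> W) :
  D2 h (fun a b => c *: F a b) = c *: D2 h F.
Proof. by rewrite /D2 scaler_sumr. Qed.

Lemma D2_sumP (W : lmodType k) h (I : Type) (s : seq I) (F : I -> H -> H -> W) :
  D2 h (fun a b => \sum_(i <- s) F i a b) = \sum_(i <- s) D2 h (F i).
Proof. by rewrite /D2 exchange_big. Qed.

Lemma D2_mul (W : lmodType k) g h (F : H -> H -> W) : bilin F ->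
  D2 (g * h) F = D2 g (fun a b => D2 h (fun c d => F (a * c) (b * d))).
Proof. by move=> hF; rewrite /D2 (hopf_D_mul hH g h hF) big_allpairs_dep. Qed.

Lemma D2_1 (W : lmodType k) (F : H -> H -> W) : bilin F -> D2 1 F = F 1 1.
Proof. by move=> hF; rewrite /D2 (hopf_D_1 hH hF) big_seq1. Qed.

Lemma coassoc (W : lmodType k) h (F : H -> H -> H -> W) : trilin F ->
  D2 h (fun a b => D2 a (fun x y => F x y b)) = R3 h F.
Proof.
move=> hF; have := hopf_coassoc hH h hF; rewrite !big_allpairs_dep /=.
by rewrite /R3 /D2.
Qed.

Lemma antl (W : lmodType k) h (G : H -> W) : lin G ->
  D2 h (fun x y => G (S x * y)) = G (e h)%:A.
Proof. by move=> hG; rewrite -(hopf_antipodel hH h) lin_sum. Qed.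
Lemma antr (W : lmodType k) h (G : H -> W) : lin G ->
  D2 h (fun x y => G (x * S y)) = G (e h)%:A.
Proof. by move=> hG; rewrite -(hopf_antipoder hH h) lin_sum. Qed.
Lemma cntl (W : lmodType k) h (G : H -> W) : lin G ->
  D2 h (fun x y => e x *: G y) = G h.
Proof.
move=> hG; rewrite -{2}(hopf_counitl hH h) lin_sum //.
by apply: eq_bigr => p _; rewrite (linZ _ _ hG).
Qed.
Lemma cntr (W : lmodType k) h (G : H -> W) : lin G ->
  D2 h (fun x y => e y *: G x) = G h.
Proof.
move=> hG; rewrite -{2}(hopf_counitr hH h) lin_sum //.
by apply: eq_bigr => p _; rewrite (linZ _ _ hG).
Qed.


Ltac mlt := cbv beta; lazymatch goal with
 | |- lin _ => first
   [ exact: lin_id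
   | match goal with hh : forall _, _ |- _ => eapply hh; mlt end
   | eapply lin_D2A; mlt
   | eapply lin_D2P; mlt
   | eapply lin_sumP; mlt
   | eapply lin_add; mlt
   | eapply lin_mulr; mlt
   | eapply lin_mull; mlt
   | eapply lin_Sc; mlt
   | eapply lin_eZ; mlt
   | eapply lin_scale; mlt
   | eapply lin_bilL; [eassumption | mlt]
   | eapply lin_bilR; [eassumption | mlt]
   | eapply lin_tri1; [eassumption | mlt]
   | eapply lin_tri2; [eassumption | mlt]
   | eapply lin_tri3; [eassumption | mlt] ]
 | |- forall _, _ => intro; mlt
 | |- _ => split; mlt
 end.

Lemma S3_1 (W : lmodType k) h (F : H -> H -> H -> H -> W) : ml4 F ->
  R3 h (fun a b c => D2 a (fun x y => F x y b c)) = R4 h F.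
Proof.
move=> hF; rewrite /R3 /=.
transitivity (D2 h (fun a m => D2 a (fun x y => D2 m (F x y)))).
  by apply: eq_D2 => a m; rewrite D2_swap.
rewrite (@coassoc _ h (fun x y m => D2 m (F x y))) //.
case: hF => h1 h2 h3 h4; mlt.
Qed.

Lemma S3_2 (W : lmodType k) h (F : H -> H -> H -> H -> W) : ml4 F ->
  R3 h (fun a b c => D2 b (fun x y => F a x y c)) = R4 h F.
Proof.
move=> hF; rewrite /R4 /R3; apply: eq_D2 => a m.
rewrite (@coassoc _ m (fun x y c => F a x y c)) //.
case: hF => h1 h2 h3 h4; mlt.
Qed.

Lemma S4_2 (W : lmodType k) h (F : H -> H -> H -> H -> H -> W) : ml5 F ->
  R4 h (fun a b c d => D2 b (fun x y => F a x y c d)) = R5 h F.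
Proof.
move=> hF; rewrite /R5 /R4; apply: eq_D2 => a m.
rewrite S3_1 //; case: hF => h1 h2 h3 h4 h5; mlt.
Qed.

Lemma S4_3 (W : lmodType k) h (F : H -> H -> H -> H -> H -> W) : ml5 F ->
  R4 h (fun a b c d => D2 c (fun x y => F a b x y d)) = R5 h F.
Proof.
move=> hF; rewrite /R5 /R4; apply: eq_D2 => a m.
rewrite S3_2 //; case: hF => h1 h2 h3 h4 h5; mlt.
Qed.

Lemma e0 : e 0 = 0.
Proof. have := hopf_e_lin hH 1 0 0; rewrite scaler0 addr0 mul1r => E.
by apply: (addIr (e 0)); rewrite add0r -E. Qed.
Lemma eD x y : e (x + y) = e x + e y.
Proof. by have := hopf_e_lin hH 1 x y; rewrite scale1r mul1r. Qed.
Lemma eZ c x : e (c *: x) = c * e x.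
Proof. by have := hopf_e_lin hH c x 0; rewrite addr0 e0 addr0. Qed.
Lemma e_sum (I : Type) (s : seq I) (g : I -> H) : e (\sum_(i <- s) g i) = \sum_(i <- s) e (g i).
Proof. elim: s => [|a s IH]; first by rewrite !big_nil e0. by rewrite !big_cons eD IH. Qed.
Lemma e_alg c : e c%:A = c.
Proof. by rewrite eZ (hopf_e_1 hH) mulr1. Qed.

Lemma S1 : S 1 = 1.
Proof.
have := hopf_antipodel hH 1; rewrite (hopf_e_1 hH) scale1r.
rewrite -/(D2 1 (fun x y => S x * y)) D2_1 ?mulr1 //; mlt.
Qed.

Lemma eS h : e (S h) = e h.
Proof.
have := congr1 e (hopf_antipodel hH h); rewrite e_alg e_sum => <-.
rewrite -{1}(hopf_counitr hH h) (lin_sum _ _ S_lin) e_sum.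
apply: eq_bigr => p _; rewrite (hopf_e_mul hH) (linZ _ _ S_lin) eZ mulrC.
done.
Qed.

Lemma S_mul g h : S (g * h) = S h * S g.
Proof.
symmetry.
transitivity (D2 g (fun g1 g2 => e g1 *: (S h * S g2))).
  by rewrite cntl //; mlt.
transitivity (D2 g (fun g1 g2 => D2 h (fun h1 h2 => (e g1 * e h1) *: (S h2 * S g2)))).
  apply: eq_D2 => g1 g2.
  transitivity (e g1 *: D2 h (fun h1 h2 => e h1 *: (S h2 * S g2))).
    by rewrite cntl //; mlt.
  by rewrite -D2_scale; apply: eq_D2 => h1 h2; rewrite scalerA.
transitivity (D2 g (fun g1 g2 => D2 h (fun h1 h2 => D2 g1 (fun a1 a2 => D2 h1 (fun b1 b2 =>
   S (a1 * b1) * (a2 * b2) * (S h2 * S g2)))))).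
  apply: eq_D2 => g1 g2; apply: eq_D2 => h1 h2.
  rewrite -(hopf_e_mul hH) -mulr_algl.
  rewrite -(@D2_mul _ g1 h1 (fun x y => S x * y * (S h2 * S g2))); last by mlt.
  by rewrite (@antl _ (g1 * h1) (fun u => u * (S h2 * S g2))) //; mlt.
transitivity (R3 g (fun a1 a2 g2 => R3 h (fun b1 b2 h2 =>
   S (a1 * b1) * a2 * (b2 * S h2) * S g2))).
  rewrite -coassoc; last by mlt.
  apply: eq_D2 => g1 g2; rewrite D2_swap; apply: eq_D2 => a1 a2.
  rewrite -coassoc; last by mlt.
  apply: eq_D2 => h1 h2; apply: eq_D2 => b1 b2.
  by rewrite !mulrA.
transitivity (R3 g (fun a1 a2 g2 => S (a1 * h) * (a2 * S g2))).
  apply: eq_D2 => a1 m; apply: eq_D2 => a2 g2.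
  rewrite /R3.
  transitivity (D2 h (fun b1 m => e m *: (S (a1 * b1) * a2 * S g2))).
    apply: eq_D2 => b1 m'.
    rewrite (@antr _ m' (fun u => S (a1 * b1) * a2 * u * S g2)); last by mlt.
    by rewrite mulr_algr -scalerAl.
  rewrite (@cntr _ h (fun b1 => S (a1 * b1) * a2 * S g2)) ?mulrA //; mlt.
rewrite /R3.
transitivity (D2 g (fun a1 m => e m *: S (a1 * h))).
  apply: eq_D2 => a1 m.
  rewrite (@antr _ m (fun u => S (a1 * h) * u)); last by mlt.
  by rewrite mulr_algr.
by rewrite (@cntr _ g (fun a1 => S (a1 * h))) //; mlt.
Qed.

Lemma D2_alg (W : lmodType k) c (F : H -> H -> W) : bilin F -> D2 c%:A F = c *: F 1 1.
Proof. by move=> hF; rewrite (linZ _ _ (D2_lin hF)) D2_1. Qed.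

Lemma D2_S (W : lmodType k) h (F : H -> H -> W) : bilin F ->
  D2 (S h) F = D2 h (fun a b => F (S b) (S a)).
Proof.
move=> hF; symmetry.
transitivity (R3 h (fun x y z => e x *: F (S z) (S y))).
  rewrite -coassoc; last by mlt.
  by apply: eq_D2 => a b; rewrite cntl //; mlt.
transitivity (R3 h (fun x y z => D2 x (fun u w => D2 (S u) (fun a1 a2 => D2 w (fun b1 b2 =>
   F (a1 * b1 * S z) (a2 * b2 * S y)))))).
  apply: eq_D2 => x m; apply: eq_D2 => y z.
  transitivity (D2 x (fun u w => D2 (S u * w) (fun t1 t2 => F (t1 * S z) (t2 * S y)))).
    rewrite (@antl _ x (fun v => D2 v (fun t1 t2 => F (t1 * S z) (t2 * S y)))); last by mlt.
    by rewrite D2_alg ?mul1r //; mlt.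
  by apply: eq_D2 => u w; rewrite D2_mul //; mlt.
transitivity (R4 h (fun u w y z => D2 (S u) (fun a1 a2 => D2 w (fun b1 b2 =>
   F (a1 * b1 * S z) (a2 * b2 * S y))))).
  by rewrite -S3_1 //; mlt.
transitivity (R5 h (fun u w1 w2 y z => D2 (S u) (fun a1 a2 => F (a1 * w1 * S z) (a2 * (w2 * S y))))).
  rewrite -S4_2; last by mlt.
  apply: eq_D2 => u m; apply: eq_D2 => w m2; apply: eq_D2 => y z.
  by rewrite D2_swap; apply: eq_D2 => w1 w2; apply: eq_D2 => a1 a2; rewrite !mulrA.
transitivity (R4 h (fun u w1 m z => e m *: D2 (S u) (fun a1 a2 => F (a1 * w1 * S z) a2))).
  rewrite -S4_3; last by mlt.
  apply: eq_D2 => u m; apply: eq_D2 => w1 m2; apply: eq_D2 => m3 z.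
  rewrite (@antr _ m3 (fun v => D2 (S u) (fun a1 a2 => F (a1 * w1 * S z) (a2 * v)))); last by mlt.
  rewrite -D2_scale; apply: eq_D2 => a1 a2.
  by rewrite mulr_algr (linZ _ _ (proj2 hF _)).
transitivity (R3 h (fun u w1 z => D2 (S u) (fun a1 a2 => F (a1 * (w1 * S z)) a2))).
  rewrite [LHS](_ : _ = R3 h (fun u w1 c => D2 c (fun m z => e m *: D2 (S u) (fun a1 a2 => F (a1 * w1 * S z) a2)))) //.
  apply: eq_D2 => u m; apply: eq_D2 => w1 c.
  rewrite cntl; last by mlt.
  by apply: eq_D2 => a1 a2; rewrite mulrA.
transitivity (D2 h (fun u q => e q *: D2 (S u) F)).
  apply: eq_D2 => u m.
  rewrite (@antr _ m (fun v => D2 (S u) (fun a1 a2 => F (a1 * v) a2))); last by mlt.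
  rewrite -D2_scale; apply: eq_D2 => a1 a2.
  by rewrite mulr_algr (linZ _ _ (proj1 hF _)).
by rewrite (@cntr _ h (fun u => D2 (S u) F)) //; mlt.
Qed.

Definition ad (h v : H) : H := D2 h (fun s t => s * v * S t).

Lemma ad_module : is_module ad.
Proof.
split.
- rewrite /ad; mlt.
- by move=> v; rewrite /ad D2_1 ?S1 ?mul1r ?mulr1 //; mlt.
- move=> g h v; rewrite /ad D2_mul; last by mlt.
  apply: eq_D2 => a1 a2.
  rewrite (@D2_pull _ _ (fun z => a1 * z * S a2)); last by mlt.
  by apply: eq_D2 => b1 b2; rewrite S_mul !mulrA.
Qed.

Lemma ad_crossed : is_crossed_module D e ad D.
Proof.
split; first exact: ad_module.
  split; [exact: hopf_D_lin hH | exact: hopf_coassoc hH | exact: hopf_counitl hH].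
move=> h v W phi hphi; rewrite !big_allpairs_dep /=.
change (D2 h (fun a b => D2 v (fun x y => phi (a * x) (ad b y))) =
        D2 h (fun a b => D2 (ad a v) (fun x y => phi (x * b) y))).
case: (hphi) => hp1 hp2.
transitivity (R3 h (fun a s t => D2 v (fun x y => phi (a * x) (s * y * S t)))).
  apply: eq_D2 => a b; rewrite /ad.
  transitivity (D2 v (fun x y => D2 b (fun s t => phi (a * x) (s * y * S t)))).
    by apply: eq_D2 => x y; rewrite (@D2_pull _ _ (phi (a * x))).
  by rewrite D2_swap.
symmetry.
transitivity (R3 h (fun s t b => D2 s (fun s1 s2 => D2 v (fun v1 v2 => D2 t (fun t1 t2 =>
   phi (s1 * v1 * S t2 * b) (s2 * v2 * S t1)))))).
  rewrite -coassoc; last by mlt.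
  apply: eq_D2 => a b; rewrite /ad.
  rewrite (@D2_pull _ _ (fun z => D2 z (fun x y => phi (x * b) y))); last by mlt.
  apply: eq_D2 => s t.
  rewrite D2_mul; last by mlt.
  rewrite D2_mul; last by mlt.
  apply: eq_D2 => s1 s2; apply: eq_D2 => v1 v2.
  by rewrite D2_S //; mlt.
transitivity (R4 h (fun s1 s2 t b => D2 v (fun v1 v2 => D2 t (fun t1 t2 =>
   phi (s1 * v1 * S t2 * b) (s2 * v2 * S t1))))).
  by rewrite -S3_1 //; mlt.
transitivity (R5 h (fun s1 s2 t1 t2 b => D2 v (fun v1 v2 =>
   phi (s1 * v1 * (S t2 * b)) (s2 * v2 * S t1)))).
  rewrite -S4_3; last by mlt.
  apply: eq_D2 => s1 m; apply: eq_D2 => s2 m2; apply: eq_D2 => t b.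
  rewrite D2_swap; apply: eq_D2 => t1 t2; apply: eq_D2 => v1 v2.
  by rewrite !mulrA.
transitivity (R4 h (fun s1 s2 t1 m => e m *: D2 v (fun v1 v2 => phi (s1 * v1) (s2 * v2 * S t1)))).
  apply: eq_D2 => s1 m; apply: eq_D2 => s2 m2; apply: eq_D2 => t1 m3.
  rewrite (@antl _ m3 (fun u => D2 v (fun v1 v2 => phi (s1 * v1 * u) (s2 * v2 * S t1)))); last by mlt.
  rewrite -D2_scale; apply: eq_D2 => v1 v2.
  by rewrite mulr_algr (linZ _ _ (hp1 _)).
rewrite [LHS](_ : _ = R3 h (fun s1 s2 c => D2 c (fun t1 m => e m *: D2 v (fun v1 v2 => phi (s1 * v1) (s2 * v2 * S t1))))) //.
apply: eq_D2 => s1 m; apply: eq_D2 => s2 c.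
by rewrite cntr //; mlt.
Qed.

Lemma e_ad h v : e (ad h v) = e v * e h.
Proof.
rewrite /ad /D2 e_sum.
transitivity (e v * e (\sum_(p <- D h) p.1 * S p.2)).
  rewrite e_sum mulr_sumr; apply: eq_bigr => p _.
  by rewrite !(hopf_e_mul hH) mulrAC mulrC.
by rewrite (hopf_antipoder hH) e_alg.
Qed.

Lemma part1 (R : seq (H * H)) : nontrivial_hopf H -> ~ QT_functor_iso D e R.
Proof.
move=> [h0 hh0] [surj _ _].
have [act' [_ Eact Eco]] := surj _ ad D ad_crossed.
set c := \sum_(r <- R) e r.1 *: r.2.
have key : forall v, v = e v *: c.
  move=> v.
  have hb : bilin (fun (a : H) (b : H) => e b *: a) by mlt.
  have := Eco v _ _ hb; rewrite big_map /= (hopf_counitr hH) => E.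
  rewrite -{1}E.
  rewrite /c scaler_sumr; apply: eq_bigr => r _.
  by rewrite Eact e_ad scalerA.
have c1 : c = 1 by rewrite [RHS]key (hopf_e_1 hH) scale1r.
by apply: (hh0 (e h0)); rewrite {1}(key h0) c1.
Qed.

Definition coad (v : H) : seq (H * H) := [seq (p.1 * S q.2, q.1) | p <- D v, q <- D p.2].

Lemma sum_coad (W : lmodType k) v (phi : H -> H -> W) :
  \sum_(p <- coad v) phi p.1 p.2 = R3 v (fun a x y => phi (a * S y) x).
Proof. by rewrite /coad big_allpairs_dep. Qed.

Lemma R3_lin (W : lmodType k) (F : H -> H -> H -> W) : trilin F -> lin (fun h => R3 h F).
Proof. move=> hF; apply: D2_lin; mlt. Qed.

Lemma coad_comodule : is_comodule D e coad.
Proof.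
split.
- move=> c x y W phi hphi; case: (hphi) => hp1 hp2.
  rewrite big_cat /tscale big_map /=.
  have -> : \sum_(j <- coad x) phi (c *: j.1) j.2 = c *: \sum_(j <- coad x) phi j.1 j.2.
    by rewrite scaler_sumr; apply: eq_bigr => j _; rewrite (linZ _ _ (hp1 _)).
  rewrite !sum_coad.
  by rewrite (R3_lin (F := fun a x y => phi (a * S y) x)) //; mlt.
- move=> v W F hF; rewrite !big_allpairs_dep /=.
  transitivity (R3 v (fun a x y => D2 (a * S y) (fun q1 q2 => F q1 q2 x))).
    by [].
  transitivity (R3 v (fun a x y => \sum_(q <- coad x) F (a * S y) q.1 q.2)); last first.
    by rewrite ?big_allpairs_dep.
  transitivity (R5 v (fun a1 a2 x y1 y2 => F (a1 * S y2) (a2 * S y1) x)).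
    rewrite [RHS](_ : _ = R4 v (fun a1 a2 x y => D2 y (fun y1 y2 => F (a1 * S y2) (a2 * S y1) x))) //.
    rewrite -S3_1 /=; last by mlt.
    apply: eq_D2 => a m; apply: eq_D2 => x y.
    rewrite D2_mul; last by mlt.
    by apply: eq_D2 => a1 a2; rewrite D2_S //; mlt.
  symmetry; rewrite -S4_3; last by mlt.
  rewrite -S3_2; last by mlt.
  apply: eq_D2 => a m; apply: eq_D2 => x y.
  by rewrite sum_coad.
- move=> v; transitivity (R3 v (fun a x y => e (a * S y) *: x)).
    by rewrite /coad big_allpairs_dep.
  transitivity (D2 v (fun a m => e a *: m)); last by rewrite cntl //; mlt.
  apply: eq_D2 => a m.
  transitivity (e a *: D2 m (fun x y => e y *: x)); last by rewrite cntr //; mlt.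
  by rewrite -D2_scale; apply: eq_D2 => x y; rewrite (hopf_e_mul hH) eS scalerA.
Qed.

Lemma R3_mul (W : lmodType k) g h (K : H -> H -> H -> W) : trilin K ->
  R3 (g * h) K = R3 g (fun g1 g2 g3 => R3 h (fun h1 h2 h3 => K (g1 * h1) (g2 * h2) (g3 * h3))).
Proof.
move=> hK; rewrite /R3 D2_mul; last by mlt.
apply: eq_D2 => a b.
transitivity (D2 h (fun c d => D2 b (fun g2 g3 => D2 d (fun h2 h3 => K (a * c) (g2 * h2) (g3 * h3))))).
  by apply: eq_D2 => c d; rewrite D2_mul //; mlt.
by rewrite D2_swap.
Qed.

Lemma coad_crossed : is_crossed_module D e (fun h v => h * v) coad.
Proof.
split.
- split; [mlt | exact: mul1r | by move=> *; rewrite mulrA].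
- exact: coad_comodule.
move=> h v W phi hphi; rewrite [in LHS]big_allpairs_dep [in RHS]big_allpairs_dep /=.
case: (hphi) => hp1 hp2.
transitivity (D2 h (fun a b => R3 v (fun x y z => phi (a * x * S z) (b * y)))).
  rewrite /D2; apply: eq_bigr => p _; rewrite /coad big_allpairs_dep.
  by apply: eq_bigr => q _; apply: eq_bigr => r _; rewrite mulrA.
transitivity (D2 h (fun a b => R3 (a * v) (fun x y z => phi (x * S z * b) y))); last first.
  by rewrite /D2; apply: eq_bigr => p _; rewrite /coad big_allpairs_dep.
symmetry.
transitivity (R4 h (fun a1 a2 a3 b => R3 v (fun v1 v2 v3 => phi (a1 * v1 * S v3 * (S a3 * b)) (a2 * v2)))).
  rewrite -S3_2; last by mlt.
  rewrite -coassoc; last by mlt.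
  apply: eq_D2 => a b; rewrite R3_mul; last by mlt.
  apply: eq_D2 => a1 m; apply: eq_D2 => a2 a3.
  apply: eq_D2 => v1 m'; apply: eq_D2 => v2 v3.
  by rewrite S_mul !mulrA.
transitivity (R3 h (fun a1 a2 m => e m *: R3 v (fun v1 v2 v3 => phi (a1 * v1 * S v3) (a2 * v2)))).
  rewrite [LHS](_ : _ = R3 h (fun a1 a2 c => D2 c (fun a3 b =>
     R3 v (fun v1 v2 v3 => phi (a1 * v1 * S v3 * (S a3 * b)) (a2 * v2))))) //.
  apply: eq_D2 => a1 m; apply: eq_D2 => a2 c.
  have hG : lin (fun u => R3 v (fun v1 v2 v3 => phi (a1 * v1 * S v3 * u) (a2 * v2))) by mlt.
  by rewrite (antl _ hG) (linZ _ _ hG); congr (_ *: _); apply: eq_D2 => v1 m'; apply: eq_D2 => v2 v3; rewrite mulr1.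
rewrite [LHS](_ : _ = D2 h (fun a1 q => D2 q (fun a2 m =>
   e m *: R3 v (fun v1 v2 v3 => phi (a1 * v1 * S v3) (a2 * v2))))) //.
apply: eq_D2 => a1 q.
by rewrite cntr //; mlt.
Qed.

Lemma part2 (R : H -> H -> k) : is_dual_quasitriangular D e R -> nontrivial_hopf H ->
  ~ DQT_functor_iso D e R.
Proof.
move=> hR [h0 hh0] [surj _ _].
have [co' [_ Eco Eact]] := surj _ (fun h v => h * v) coad coad_crossed.
have hRl : forall (f : H -> H) b (w : H), lin f -> lin (fun a => R (f a) b *: w).
  move=> f b w hf c x y; rewrite hf; case: hR => [[hr1 _]] _ _ _ _.
  by rewrite hr1 scalerDl scalerA.
have hb : bilin (fun a b : H => R a h0 *: b).
  split; [move=> b; exact: (hRl id) | move=> a; mlt].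
have E1 := Eact h0 1; have E2 := Eco 1 _ _ hb.
rewrite /DQT_act mulr1 in E1; cbv beta in E2.
rewrite E2 /coad big_allpairs_dep /= in E1.
have E3 : R3 1 (fun a x y => R (a * S y) h0 *: x) = h0 by [].
rewrite /R3 D2_1 in E3; last first.
  split; first by move=> m; apply: lin_D2P => x y; apply: hRl; mlt.
  move=> a; mlt.
rewrite D2_1 in E3; last by mlt.
by apply: (hh0 (R (1 * S 1) h0)); rewrite E3.
Qed.

End Hopf.
End Aux.

Theorem proposition4p1 :
  (forall (k : fieldType) (H : algType k) (D : H -> seq (H * H)) (e : H -> k)
          (S : H -> H) (R : seq (H * H)),
     is_hopf D e S -> is_quasitriangular D R -> nontrivial_hopf H ->
     ~ QT_functor_iso D e R) /\
  (forall (k : fieldType) (H : algType k) (D : H -> seq (H * H)) (e : H -> k)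
          (S : H -> H) (R : H -> H -> k),
     is_hopf D e S -> is_dual_quasitriangular D e R -> nontrivial_hopf H ->
     ~ DQT_functor_iso D e R).
Proof.
split.
- move=> k H D e S R hH _ hn; exact: (Aux.part1 hH hn).
- move=> k H D e S R hH hR hn; exact: (Aux.part2 hH hR hn).
Qed.
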